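(* Let $\epsilon>0$, $\delta>0$, and let $\rho$ be a pure $n$-qubit state. Then $N=O(n\log(1/\delta)/\epsilon^2)$ pairs of copies $\rho\otimes\rho$ suffice to produce, with probability $1-\delta$, simultaneously for all $x=(v_1,w_1,\dots,v_n,w_n)\in\{0,1\}^{2n}$ and all $1\le k\le n$: estimates $\pi_\rho(v_1,w_1,\dots,v_k,w_k)$ with $|\pi_\rho(v_1,w_1,\dots,v_k,w_k)-p_\rho(v_1,w_1,\dots,v_k,w_k)|\le\epsilon/2^k$, and estimates $\pi_\rho(v_1,w_1,\dots,v_k)$ with $|\pi_\rho(v_1,w_1,\dots,v_k)-p_\rho(v_1,w_1,\dots,v_k)|\le 2\epsilon/2^k$.
   Context: Pauli strings are labelled by $x=(v_1,w_1,\dots,v_n,w_n)\in\{0,1\}^{2n}$ via $P_x=i^{v\cdot w}(X^{v_1}Z^{w_1})\otimes\cdots\otimes(X^{v_n}Z^{w_n})$. The Pauli distribution of a pure state is $p_\rho(x)=\mathrm{tr}(\rho P_x)^2/2^n$, viewed as a distribution on bit strings of length $2n$; $p_\rho(v_1,w_1,\dots,v_k,w_k)$ and $p_\rho(v_1,w_1,\dots,v_k)$ denote its marginals on the first $2k$ and first $2k-1$ bits respectively (sums over all remaining bits). *)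

(* Defs.v *)
From HB Require Import structures.
From mathcomp Require Import all_boot all_order all_algebra.
From mathcomp Require Import complex.
From mathcomp Require Import reals exp.
Set Implicit Arguments. Unset Strict Implicit. Unset Printing Implicit Defensive.
Import Order.TTheory GRing.Theory Num.Theory.
Local Open Scope ring_scope.
Local Open Scope complex_scope.

Section Pauli.
Variable R : realType.
Local Notation C := R[i].

Definition bits (n : nat) := {ffun 'I_n -> bool}.
(* Pauli labels x = (v_1,w_1,...,v_n,w_n), stored as x i = (v_{i+1}, w_{i+1}) *)
Definition plabel (n : nat) := {ffun 'I_n -> bool * bool}.

(* matrix entry <a| P_x |b>, P_x = i^{v.w} (X^{v_1}Z^{w_1}) (x) ... (x) (X^{v_n}Z^{w_n});
   (X^v Z^w)|b> = (-1)^{w b} |b xor v> *)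
Definition pauli_entry n (x : plabel n) (a b : bits n) : C :=
  'i ^+ (\sum_(i < n) ((x i).1 && (x i).2 : nat))%N *
  \prod_(i < n) ((a i == xorb (b i) (x i).1)%:R * (-1) ^+ ((x i).2 && b i)).

Definition pure_state n (psi : {ffun bits n -> C}) : Prop :=
  \sum_(a : bits n) (psi a)^* * psi a = 1.

(* tr(rho P_x) with rho = |psi><psi| *)
Definition pauli_expval n (psi : {ffun bits n -> C}) (x : plabel n) : C :=
  \sum_(a : bits n) \sum_(b : bits n) (psi a)^* * pauli_entry x a b * psi b.

Definition pauli_dist n (psi : {ffun bits n -> C}) (x : plabel n) : C :=
  pauli_expval psi x ^+ 2 / (2 ^+ n).

(* p_rho(v_1,w_1,...,v_k,w_k): marginal on the first 2k bits of x *)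
Definition marg_even n (psi : {ffun bits n -> C}) (k : nat) (x : plabel n) : C :=
  \sum_(y : plabel n | [forall i : 'I_n, (i < k)%N ==> (y i == x i)])
     pauli_dist psi y.

(* p_rho(v_1,w_1,...,v_k): marginal on the first 2k-1 bits of x *)
Definition marg_odd n (psi : {ffun bits n -> C}) (k : nat) (x : plabel n) : C :=
  \sum_(y : plabel n | [forall i : 'I_n,
          ((i.+1 < k)%N ==> (y i == x i)) &&
          ((i.+1 == k)%N ==> ((y i).1 == (x i).1))])
     pauli_dist psi y.

(* Hilbert space of N pairs of copies rho (x) rho: basis indexed by
   'I_N -> bits n * bits n *)
Definition pairs_basis (n N : nat) := {ffun 'I_N -> bits n * bits n}.

(* the state vector |psi>^{(x) 2N} = (|psi> (x) |psi>)^{(x) N} *)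
Definition copies n N (psi : {ffun bits n -> C}) (t : pairs_basis n N) : C :=
  \prod_(j < N) (psi (t j).1 * psi (t j).2).

Definition is_povm (T O : finType) (M : O -> T -> T -> C) : Prop :=
  (forall o (v : T -> C), 0 <= \sum_(a : T) \sum_(b : T) (v a)^* * M o a b * v b) /\
  (forall a b : T, \sum_(o : O) M o a b = (a == b)%:R).

Definition povm_prob (T O : finType) (M : O -> T -> T -> C) (Psi : T -> C)
  (S : pred O) : C :=
  \sum_(o : O | S o) \sum_(a : T) \sum_(b : T) (Psi a)^* * M o a b * Psi b.

End Pauli.

(* Main.v *)
Require Import Defs.
From HB Require Import structures.
From mathcomp Require Import all_boot all_order all_algebra.
From mathcomp Require Import complex.
From mathcomp Require Import reals exp sequences.
From mathcomp Require Import ring lra zify.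
Import Order.TTheory GRing.Theory Num.Theory.
Local Open Scope ring_scope.
Local Open Scope complex_scope.

Section Gen.
Variable T : comNzRingType.

Definition phi1 (u v b b' : bool) : T := (b' == xorb b u)%:R * (-1) ^+ (v && b).
Definition lam1 (u v p r : bool) : T :=
  (-1) ^+ (p && r) * (-1) ^+ (r && u) * (-1) ^+ (v && p).
Definition pe1 (p r a b : bool) : T := (a == xorb b p)%:R * (-1) ^+ (r && b).

Lemma sum_bb (F : bool * bool -> T) :
  \sum_(x : bool * bool) F x = F (false,false) + F (false,true) + F (true,false) + F (true,true).
Proof.
rewrite (eq_bigr (fun x => F (x.1, x.2))); last by case.
rewrite -(pair_bigA _ (fun a b => F (a, b))) /=.
rewrite !big_bool /=. ring.
Qed.

Lemma kernel1 p r a b c d :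
  (1 + 1) * ((-1) ^+ (p && r) * pe1 p r a b * pe1 p r c d) =
  \sum_(x : bool * bool) lam1 x.1 x.2 p r * phi1 x.1 x.2 a c * phi1 x.1 x.2 b d.
Proof.
rewrite sum_bb /lam1 /phi1 /pe1.
by case: p; case: r; case: a; case: b; case: c; case: d => /=; ring.
Qed.

Lemma compl1 a b c d :
  \sum_(x : bool * bool) phi1 x.1 x.2 a c * phi1 x.1 x.2 b d =
  (1 + 1) * ((a == b) && (c == d))%:R.
Proof.
rewrite sum_bb /phi1.
by case: a; case: b; case: c; case: d => /=; ring.
Qed.

Lemma lamsum1 u v :
  \sum_(x : bool * bool) lam1 u v x.1 x.2 = (1 + 1) * (-1) ^+ (u && v).
Proof.
rewrite sum_bb /lam1.
by case: u; case: v => /=; ring.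
Qed.

End Gen.

Set Implicit Arguments. Unset Strict Implicit.

Section GenN.
Variable T : comNzRingType.

Lemma prod_eq_ind (I : finType) (X : eqType) (f g : {ffun I -> X}) :
  \prod_i ((f i == g i)%:R : T) = (f == g)%:R.
Proof.
case: eqP => [->|ne]; first by rewrite big1 // => i _; rewrite eqxx.
have [i Hi] : exists i, f i != g i.
  apply/existsP; apply: contra_notT ne => /existsPn H.
  by apply/ffunP => i; apply/eqP; have := H i; rewrite negbK.
by rewrite (bigD1 i) //= (negbTE Hi) mul0r.
Qed.

Variable n : nat.

Definition Phi (al : plabel n) (a c : bits n) : T :=
  \prod_i phi1 T (al i).1 (al i).2 (a i) (c i).
Definition lam (al y : plabel n) : T :=
  \prod_i lam1 T (al i).1 (al i).2 (y i).1 (y i).2.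

Lemma complN (a b c d : bits n) :
  \sum_(al : plabel n) Phi al a c * Phi al b d = (1 + 1) ^+ n * ((a == b) && (c == d))%:R.
Proof.
rewrite (eq_bigr (fun al : plabel n => \prod_i (phi1 T (al i).1 (al i).2 (a i) (c i) *
   phi1 T (al i).1 (al i).2 (b i) (d i)))); last by move=> al _; rewrite /Phi -big_split.
rewrite -(bigA_distr_bigA (fun i (x : bool * bool) => phi1 T x.1 x.2 (a i) (c i) * phi1 T x.1 x.2 (b i) (d i))) /=.
rewrite (eq_bigr (fun i => (1 + 1) * ((a i == b i)%:R * (c i == d i)%:R))); last first.
  by move=> i _; rewrite compl1 -natrM mulnb.
rewrite big_split /= prodr_const card_ord big_split /= !prod_eq_ind.
by rewrite -natrM mulnb.
Qed.

End GenN.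

Lemma kernelN n (y : plabel n) (a b c d : bits n) (R : realType) :
  (1 + 1) ^+ n * (pauli_entry R y a b * pauli_entry R y c d) =
  \sum_(al : plabel n) lam (R[i]) al y * Phi (R[i]) al a c * Phi (R[i]) al b d.
Proof.
rewrite (eq_bigr (fun al : plabel n => \prod_i (lam1 (R[i]) (al i).1 (al i).2 (y i).1 (y i).2 *
   phi1 _ (al i).1 (al i).2 (a i) (c i) * phi1 _ (al i).1 (al i).2 (b i) (d i)))); last first.
  by move=> al _; rewrite /Phi /lam -!big_split.
rewrite -(bigA_distr_bigA (fun i (x : bool * bool) => lam1 (R[i]) x.1 x.2 (y i).1 (y i).2 *
   phi1 _ x.1 x.2 (a i) (c i) * phi1 _ x.1 x.2 (b i) (d i))) /=.
rewrite (eq_bigr (fun i => (1 + 1) * ((-1) ^+ ((y i).1 && (y i).2) * pe1 _ (y i).1 (y i).2 (a i) (b i)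
   * pe1 _ (y i).1 (y i).2 (c i) (d i)))); last by move=> i _; rewrite -kernel1.
rewrite big_split /= prodr_const card_ord; congr (_ * _).
rewrite /pauli_entry.
set m := (\sum_(i < n) _)%N.
have -> : 'i ^+ m * \prod_(i < n) ((a i == xorb (b i) (y i).1)%:R * (-1) ^+ ((y i).2 && b i))
    * ('i ^+ m * \prod_(i < n) ((c i == xorb (d i) (y i).1)%:R * (-1) ^+ ((y i).2 && d i)))
    = ('i * 'i) ^+ m * (\prod_(i < n) pe1 (R[i]) (y i).1 (y i).2 (a i) (b i)
       * \prod_(i < n) pe1 (R[i]) (y i).1 (y i).2 (c i) (d i)).
  by rewrite exprMn /pe1; ring.
have -> : 'i * 'i = -1 :> R[i] by rewrite -expr2 sqr_i.
rewrite /m (big_morph (fun k => (-1 : R[i]) ^+ k) (fun x y => exprD _ x y) (expr0 _)).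
rewrite -!big_split /=. apply: eq_bigr => i _. ring.
Qed.

Section Q.
Variable R : realType.
Local Notation C := R[i].
Variable n : nat.

Lemma PhiC (al : plabel n) a c : (Phi R al a c)%:C = Phi C al a c.
Proof.
rewrite /Phi rmorph_prod; apply: eq_bigr => i _.
by rewrite /phi1 rmorphM rmorphXn rmorph_nat rmorphN1.
Qed.

Lemma lamC (al y : plabel n) : (lam R al y)%:C = lam C al y.
Proof.
rewrite /lam rmorph_prod; apply: eq_bigr => i _.
by rewrite /lam1 !rmorphM !rmorphXn rmorphN1.
Qed.

Lemma conjR (x : R) : (x%:C)^* = x%:C :> C.
Proof. by rewrite /conjc /= oppr0. Qed.
Lemma conjR' (x : R) : Num.conj (x%:C) = x%:C :> C.
Proof. exact: conjR. Qed.

Definition cn : R := ((1 + 1) ^+ n)^-1.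

Lemma cnK : cn * (1 + 1) ^+ n = 1.
Proof. rewrite /cn mulVf // expf_neq0 //; have : (0 : R) < 1 + 1 by lra. by move/lt0r_neq0. Qed.

Lemma cn_ge0 : 0 <= cn.
Proof. by rewrite /cn invr_ge0 exprn_ge0 //; lra. Qed.

Definition Wt (al : plabel n) (s s' : bits n * bits n) : R :=
  cn * Phi R al s.1 s.2 * Phi R al s'.1 s'.2.

Lemma Wt_sum s s' : \sum_(al : plabel n) Wt al s s' = (s == s')%:R.
Proof.
rewrite /Wt (eq_bigr (fun al => cn * (Phi R al s.1 s.2 * Phi R al s'.1 s'.2))); last first.
  by move=> al _; rewrite mulrA.
rewrite -big_distrr /= complN mulrA cnK mul1r.
by case: s => a c; case: s' => b d /=; rewrite xpair_eqE.
Qed.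

Variable psi : {ffun bits n -> C}.

Definition pp (s : bits n * bits n) : C := psi s.1 * psi s.2.
Definition zz (al : plabel n) : C := \sum_s (Phi R al s.1 s.2)%:C * pp s.
Definition Qc (al : plabel n) : C :=
  \sum_s \sum_s' (pp s)^* * (Wt al s s')%:C * pp s'.
Definition qR (al : plabel n) : R := cn * ((complex.Re (zz al)) ^+ 2 + (complex.Im (zz al)) ^+ 2).

Lemma qR_ge0 al : 0 <= qR al.
Proof. by rewrite /qR mulr_ge0 ?cn_ge0 // addr_ge0 // sqr_ge0. Qed.

Lemma QcE al : Qc al = (qR al)%:C.
Proof.
have -> : Qc al = cn%:C * ((zz al)^* * zz al).
  rewrite /Qc /zz rmorph_sum big_distrl big_distrr /=; apply: eq_bigr => s _.
  rewrite big_distrr big_distrr /=; apply: eq_bigr => s' _.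
  by rewrite /Wt !rmorphM /= conjR'; ring.
rewrite /qR rmorphM /= add_Re2_Im2 sqr_normc; congr (_ * _); rewrite mulrC; reflexivity.
Qed.

Lemma sum_ind (X : finType) (F : X -> C) s : \sum_s' (s == s')%:R * F s' = F s.
Proof.
rewrite (bigD1 s) //= eqxx mul1r big1 ?addr0 // => s' /negbTE.
by rewrite eq_sym => ->; rewrite mul0r.
Qed.

Lemma qR_sum : pure_state psi -> \sum_al qR al = 1.
Proof.
move=> Hps; apply: complexI; rewrite rmorph_sum /=.
rewrite (eq_bigr _ (fun al _ => esym (QcE al))) /Qc.
rewrite exchange_big /=.
rewrite (eq_bigr (fun s => (pp s)^* * pp s)); last first.
  move=> s _; rewrite exchange_big /=.
  rewrite (eq_bigr (fun s' => (s == s')%:R * ((pp s)^* * pp s'))); last first.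
    move=> s' _; rewrite -big_distrl -big_distrr /= -rmorph_sum Wt_sum /=.
    rewrite rmorph_nat; ring.
  by rewrite sum_ind.
rewrite -(pair_bigA _ (fun a c => (pp (a, c))^* * pp (a, c))) /=.
rewrite /pp.
rewrite (eq_bigr (fun a => (psi a)^* * psi a * \sum_c (psi c)^* * psi c)); last first.
  by move=> a _; rewrite big_distrr /=; apply: eq_bigr => c _; rewrite rmorphM; ring.
by rewrite -big_distrl /= Hps mul1r.
Qed.

Lemma expval_sq (y : plabel n) :
  pauli_expval psi y ^+ 2 = \sum_al (qR al)%:C * (lam R al y)%:C.
Proof.
rewrite (eq_bigr _ (fun al _ => congr1 (fun z => z * (lam R al y)%:C) (esym (QcE al)))).
rewrite /Qc.
rewrite (eq_bigr (fun al => \sum_s \sum_s' (pp s)^* * pp s' * cn%:C *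
     (lam C al y * Phi C al s.1 s.2 * Phi C al s'.1 s'.2))); last first.
  move=> al _; rewrite big_distrl /=; apply: eq_bigr => s _.
  rewrite big_distrl /=; apply: eq_bigr => s' _.
  by rewrite /Wt !rmorphM /= !PhiC lamC; ring.
rewrite exchange_big /=.
rewrite (eq_bigr (fun s => \sum_s' (pp s)^* * pp s' *
     (pauli_entry R y s.1 s'.1 * pauli_entry R y s.2 s'.2))); last first.
  move=> s _; rewrite exchange_big /=; apply: eq_bigr => s' _.
  rewrite -big_distrr /= -kernelN.
  have H : (cn * (1 + 1) ^+ n)%:C = 1 :> C by rewrite cnK.
  rewrite rmorphM rmorphXn rmorphD rmorph1 /= in H.
  transitivity ((pp s)^* * pp s' *
    (pauli_entry R y s.1 s'.1 * pauli_entry R y s.2 s'.2) * (cn%:C * (1 + 1) ^+ n)); first by ring.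
  by rewrite H mulr1.
set F := (fun a c : bits n => \sum_b \sum_d (pp (a, c))^* * pp (b, d) *
     (pauli_entry R y a b * pauli_entry R y c d)).
rewrite (eq_bigr (fun s => F s.1 s.2)); last first.
  case=> a c _; set G := (fun b d => (pp (a, c))^* * pp (b, d) *
     (pauli_entry R y a b * pauli_entry R y c d)).
  rewrite (eq_bigr (fun s' => G s'.1 s'.2)); last by case.
  by rewrite -(pair_bigA _ G).
rewrite -(pair_bigA _ F) /F.
rewrite /pauli_expval expr2 big_distrl /=; apply: eq_bigr => a _.
rewrite big_distrl /= [RHS]exchange_big /=; apply: eq_bigr => b _.
rewrite big_distrr /=; apply: eq_bigr => c _.
rewrite big_distrr /=; apply: eq_bigr => d _.
rewrite /pp rmorphM /=; ring.
Qed.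

End Q.

Lemma prod_forall (T : comNzRingType) (I : finType) (P : pred I) :
  \prod_i ((P i)%:R : T) = [forall i, P i]%:R.
Proof.
case: (boolP [forall i, P i]) => [/forallP H|].
  by rewrite big1 // => i _; rewrite H.
move/forallPn => [i Hi]; by rewrite (bigD1 i) //= (negbTE Hi) mul0r.
Qed.

Section M.
Variable R : realType.
Local Notation C := R[i].
Variable n : nat.

Definition Yk (k : nat) (x y : plabel n) := [forall i : 'I_n, (i < k)%N ==> (y i == x i)].

Definition gR k (x al : plabel n) : R := cn R n * \sum_(y | Yk k x y) lam R al y.

Lemma sum_ind_R (X : finType) (F : X -> R) s : \sum_s' (s' == s)%:R * F s' = F s.
Proof.
rewrite (bigD1 s) //= eqxx mul1r big1 ?addr0 // => s' /negbTE ->.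
by rewrite mul0r.
Qed.

Lemma lam_sum k (x al : plabel n) :
  \sum_(y | Yk k x y) lam R al y =
  \prod_(i < n) (if (i < k)%N then lam1 R (al i).1 (al i).2 (x i).1 (x i).2
                 else (1 + 1) * (-1) ^+ ((al i).1 && (al i).2)).
Proof.
rewrite big_mkcond /=.
rewrite (eq_bigr (fun y : plabel n => \prod_(i < n) (((i < k)%N ==> (y i == x i))%:R *
     lam1 R (al i).1 (al i).2 (y i).1 (y i).2))); last first.
  by move=> y _; rewrite big_split /= prod_forall /Yk /lam; case: ifP; rewrite ?mul1r ?mul0r.
rewrite -(bigA_distr_bigA (fun (i : 'I_n) (p : bool * bool) => (((i < k)%N ==> (p == x i))%:R *
     lam1 R (al i).1 (al i).2 p.1 p.2))) /=.
apply: eq_bigr => i _; case: ifP => _ /=.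
  by rewrite (sum_ind_R (fun p : bool * bool => lam1 R (al i).1 (al i).2 p.1 p.2)).
by rewrite (eq_bigr (fun p : bool * bool => lam1 R (al i).1 (al i).2 p.1 p.2)) ?lamsum1 // => p _; rewrite mul1r.
Qed.

Lemma norm_lam1 u v p r : `|lam1 R u v p r| = 1.
Proof. by rewrite /lam1 !normrM !normrX normrN1 !expr1n !mulr1. Qed.

Lemma prod_cnt k : (k <= n)%N ->
  \prod_(i < n) (if (i < k)%N then 1 else 1 + 1 : R) = (1 + 1) ^+ (n - k).
Proof.
move=> kn.
rewrite -(big_mkord xpredT (fun i => if (i < k)%N then 1 else 1 + 1 : R)).
rewrite (big_cat_nat (leq0n k) kn) /=.
rewrite big_nat_cond big1 ?mul1r; last by move=> i /andP [/andP [_ ->]].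
rewrite big_nat_cond (eq_bigr (fun _ => 1 + 1)); last first.
  by move=> i /andP [/andP [H _] _]; rewrite ltnNge H.
by rewrite -big_nat_cond prodr_const_nat.
Qed.

Definition hR k (x al : plabel n) : R := (1 + 1) ^+ k * gR k x al.

Lemma hR_bound k x al : (k <= n)%N -> `|hR k x al| <= 1.
Proof.
move=> kn.
have -> : `|hR k x al| = (1 + 1) ^+ k * cn R n * (1 + 1) ^+ (n - k).
  rewrite /hR /gR lam_sum !normrM normr_prod -prod_cnt //.
  have -> : `|(1 + 1) ^+ k : R| = (1 + 1) ^+ k by rewrite ger0_norm // exprn_ge0 //; lra.
  have -> : `|cn R n| = cn R n by rewrite ger0_norm // cn_ge0.
  rewrite mulrA; congr (_ * _); apply: eq_bigr => i _; case: ifP => _.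
    by rewrite norm_lam1.
  by rewrite normrM normrX normrN1 expr1n mulr1 ger0_norm //; lra.
by rewrite mulrAC -exprD subnKC // mulrC cnK.
Qed.

Variable psi : {ffun bits n -> C}.

Lemma marg_evenE k x :
  marg_even psi k x = (((1 + 1) ^+ k)^-1 * \sum_al qR psi al * hR k x al)%:C.
Proof.
have -> : ((1 + 1) ^+ k)^-1 * \sum_al qR psi al * hR k x al = \sum_al qR psi al * gR k x al.
  rewrite big_distrr /=; apply: eq_bigr => al _; rewrite /hR mulrA mulrCA.
  have h2 : (1 + 1) ^+ k != 0 :> R.
    rewrite expf_neq0 //; have : (0 : R) < 1 + 1 by lra. by move/lt0r_neq0.
  transitivity (qR psi al * ((1 + 1) ^+ k * ((1 + 1) ^+ k)^-1) * gR k x al); first by ring.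
  by rewrite mulfV // mulr1.
rewrite /marg_even /pauli_dist.
rewrite (eq_bigr (fun y => \sum_al (qR psi al * cn R n * lam R al y)%:C)); last first.
  move=> y _; rewrite expval_sq big_distrl /=; apply: eq_bigr => al _.
  rewrite !rmorphM /= /cn fmorphV rmorphXn rmorphD rmorph1.
  have -> : (2 : C) = 1 + 1 by [].
  by rewrite mulrAC.
rewrite exchange_big rmorph_sum /=; apply: eq_bigr => al _.
rewrite -rmorph_sum /gR; congr (_%:C).
by rewrite mulrA big_distrr.
Qed.

End M.

Section P.
Variable R : realType.
Local Notation C := R[i].
Variables n N : nat.

Lemma sum_prod2 (X : finType) (H : 'I_N -> X -> X -> C) :
  \sum_(t : {ffun 'I_N -> X}) \sum_(t' : {ffun 'I_N -> X}) \prod_j H j (t j) (t' j) =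
  \prod_j \sum_s \sum_s' H j s s'.
Proof.
rewrite (eq_bigr (fun t : {ffun 'I_N -> X} => \prod_j \sum_s' H j (t j) s')); last first.
  by move=> t _; rewrite -(bigA_distr_bigA (fun j s' => H j (t j) s')).
by rewrite -(bigA_distr_bigA (fun j s => \sum_s' H j s s')).
Qed.

Definition Mv (o : {ffun 'I_N -> plabel n}) (t t' : pairs_basis n N) : C :=
  (\prod_j Wt R (o j) (t j) (t' j))%:C.

Lemma Mv_povm : is_povm Mv.
Proof.
split.
  move=> o v.
  pose G (t : pairs_basis n N) : C := (\prod_j Phi R (o j) (t j).1 (t j).2)%:C.
  have HM : forall t t', Mv o t t' = (cn R n ^+ N)%:C * G t * G t'.
    move=> t t'; rewrite /Mv /G /Wt -!rmorphM /=; congr (_%:C).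
    by rewrite !big_split /= prodr_const card_ord.
  have -> : \sum_t \sum_t' (v t)^* * Mv o t t' * v t' =
      (cn R n ^+ N)%:C * ((\sum_t G t * v t)^* * (\sum_t G t * v t)).
    rewrite rmorph_sum big_distrl big_distrr /=; apply: eq_bigr => t _.
    rewrite big_distrr big_distrr /=; apply: eq_bigr => t' _.
    by rewrite HM rmorphM /= /G conjR'; ring.
  apply: mulr_ge0; first by rewrite ler0c exprn_ge0 // cn_ge0.
  by rewrite mulrC; apply: mulcJ_ge0.
move=> t t'.
rewrite /Mv -rmorph_sum /=.
rewrite -(bigA_distr_bigA (fun j al => Wt R al (t j) (t' j))) /=.
rewrite (eq_bigr (fun j => ((t j == t' j)%:R : R))); last by move=> j _; rewrite Wt_sum.
by rewrite prod_eq_ind rmorph_nat.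
Qed.

Variable psi : {ffun bits n -> C}.

Lemma povm_probE (S : pred {ffun 'I_N -> plabel n}) :
  povm_prob Mv (copies (N:=N) psi) S = (\sum_(o | S o) \prod_j qR psi (o j))%:C.
Proof.
rewrite /povm_prob rmorph_sum /=; apply: eq_bigr => o _.
rewrite rmorph_prod /=.
rewrite (eq_bigr (fun j => Qc psi (o j))); last by move=> j _; rewrite QcE.
rewrite /Qc -sum_prod2; apply: eq_bigr => t _; apply: eq_bigr => t' _.
rewrite /copies /Mv rmorph_prod rmorph_prod /= -!big_split /=.
by apply: eq_bigr => j _.
Qed.

Lemma qprod_sum : pure_state psi -> \sum_(o : {ffun 'I_N -> plabel n}) \prod_j qR psi (o j) = 1.
Proof.
move=> Hp; rewrite -(bigA_distr_bigA (fun j al => qR psi al)) /=.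
by rewrite big1 // => j _; rewrite qR_sum.
Qed.

End P.

Section Ch.
Variable R : realType.

Lemma exp_quad (y : R) : 2 * y <= 1 -> expR y <= 1 + y + 2 * y ^+ 2.
Proof.
move=> hy.
have h1 : 1 - y <= expR (- y) by have := expR_ge1Dx (- y); lra.
have hp : 0 < 1 - y by lra.
have -> : expR y = (expR (- y))^-1 by rewrite expRN invrK.
apply: (le_trans (y := (1 - y)^-1)).
  by rewrite lef_pV2 // posrE // expR_gt0.
have hZ : 1 <= (1 - y) * (1 + y + 2 * y ^+ 2).
  have : 0 <= y ^+ 2 * (1 - 2 * y) by rewrite mulr_ge0 ?sqr_ge0 //; lra.
  move=> h; rewrite expr2 in h *; nra.
rewrite -[_^-1]mul1r ler_pdivrMr //; lra.
Qed.

Variables (A : finType) (q h : A -> R).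
Hypothesis q_ge0 : forall a, 0 <= q a.
Hypothesis q_sum : \sum_a q a = 1.
Hypothesis h_le1 : forall a, `|h a| <= 1.

Definition mu := \sum_a q a * h a.

Lemma mu_le1 : `|mu| <= 1.
Proof.
rewrite /mu; apply: (le_trans (ler_norm_sum _ _ _)); rewrite -q_sum.
apply: ler_sum => a _; rewrite normrM ger0_norm //.
by rewrite -[X in _ <= X]mulr1 ler_wpM2l.
Qed.

Lemma mgf_bound (l : R) : 0 <= l -> 4 * l <= 1 ->
  \sum_a q a * expR (l * (h a - mu)) <= expR (8 * l ^+ 2).
Proof.
move=> l0 l1.
have hd : forall a, `|h a - mu| <= 2.
  move=> a; apply: (le_trans (ler_normB _ _)).
  have := h_le1 a; have := mu_le1; lra.
apply: (le_trans (y := \sum_a (q a + l * (q a * h a) - l * mu * q a + 8 * l ^+ 2 * q a))).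
  apply: ler_sum => a _.
  have ha := hd a.
  have hy : 2 * (l * (h a - mu)) <= 1.
    have : h a - mu <= 2 by move: ha; rewrite ler_norml => /andP [].
    nra.
  apply: (le_trans (ler_wpM2l (q_ge0 a) (exp_quad hy))).
  have hsq : (l * (h a - mu)) ^+ 2 <= 4 * l ^+ 2.
    rewrite exprMn mulrC ler_wpM2r ?sqr_ge0 //.
    have : `|h a - mu| ^+ 2 <= 2 ^+ 2.
      by apply: lerXn2r => //; rewrite nnegrE.
    by rewrite real_normK ?num_real //; lra.
  have := q_ge0 a; nra.
rewrite !big_split /= sumrN -!big_distrr /= -/mu q_sum.
have := expR_ge1Dx (8 * l ^+ 2); lra.
Qed.

Lemma chernoff1 (N : nat) (eps : R) : 0 < eps -> eps <= 1 ->
  \sum_(o : {ffun 'I_N -> A} | eps * N%:R < \sum_j (h (o j) - mu)) \prod_j q (o j)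
    <= expR (- (N%:R * eps ^+ 2 / 32)).
Proof.
move=> e0 e1.
set l := eps / 16.
have l0 : 0 <= l by rewrite /l; lra.
have l1 : 4 * l <= 1 by rewrite /l; lra.
apply: (le_trans (y := \sum_(o : {ffun 'I_N -> A}) \prod_j q (o j) *
    expR (l * \sum_j (h (o j) - mu) - l * eps * N%:R))).
  rewrite big_mkcond /=; apply: ler_sum => o _.
  have w0 : 0 <= \prod_j q (o j) by apply: prodr_ge0.
  case: ifP => hb.
    rewrite -[X in X <= _]mulr1 ler_wpM2l //.
    have : 0 <= l * \sum_j (h (o j) - mu) - l * eps * N%:R.
      rewrite -mulrA -mulrBr mulr_ge0 //; lra.
    move=> hz; have := expR_ge1Dx (l * \sum_j (h (o j) - mu) - l * eps * N%:R); lra.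
  by rewrite mulr_ge0 // expR_ge0.
rewrite (eq_bigr (fun o : {ffun 'I_N -> A} => expR (- (l * eps * N%:R)) *
    \prod_j (q (o j) * expR (l * (h (o j) - mu))))); last first.
  move=> o _; rewrite expRD mulr_sumr expR_sum big_split /=; ring.
rewrite -big_distrr /=.
rewrite -(bigA_distr_bigA (fun j a => q a * expR (l * (h a - mu)))) /=.
rewrite prodr_const card_ord.
apply: (le_trans (y := expR (- (l * eps * N%:R)) * expR (8 * l ^+ 2) ^+ N)).
  rewrite ler_wpM2l ?expR_ge0 // lerXn2r ?nnegrE ?expR_ge0 ?mgf_bound //.
  by apply: sumr_ge0 => a _; rewrite mulr_ge0 ?expR_ge0.
rewrite -expRM_natl -expRD.
have -> : - (l * eps * N%:R) + N%:R * (8 * l ^+ 2) = - (N%:R * eps ^+ 2 / 32).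
  by rewrite /l; field.
exact: lexx.
Qed.

End Ch.

Lemma sum_or (R : realType) (T : finType) (P P1 P2 : pred T) (w : T -> R) :
  (forall o, 0 <= w o) -> (forall o, P o -> P1 o || P2 o) ->
  \sum_(o | P o) w o <= \sum_(o | P1 o) w o + \sum_(o | P2 o) w o.
Proof.
move=> w0 H; rewrite !(big_mkcond P) (big_mkcond P1) (big_mkcond P2) -big_split /=.
apply: ler_sum => o _; case: ifP => hp; last by rewrite addr_ge0 //; case: ifP.
by have := w0 o; case/orP: (H o hp) => -> /=; case: ifP => _ /=; lra.
Qed.

Lemma chernoff2 (R : realType) (A : finType) (q h : A -> R) (N : nat) (eps : R) :
  (forall a, 0 <= q a) -> \sum_a q a = 1 -> (forall a, `|h a| <= 1) -> 0 < eps -> eps <= 1 ->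
  \sum_(o : {ffun 'I_N -> A} | eps * N%:R < `|\sum_j h (o j) - N%:R * mu q h|) \prod_j q (o j)
    <= 2 * expR (- (N%:R * eps ^+ 2 / 32)).
Proof.
move=> q0 q1 h1 e0 e1.
have h1' : forall a, `|(fun a => - h a) a| <= 1 by move=> a; rewrite normrN.
apply: (le_trans (sum_or (P1 := fun o : {ffun 'I_N -> A} => eps * N%:R < \sum_j (h (o j) - mu q h))
   (P2 := fun o : {ffun 'I_N -> A} => eps * N%:R < \sum_j ((fun a => - h a) (o j) - mu q (fun a => - h a))) _ _)).
- by move=> o; apply: prodr_ge0.
- move=> o; rewrite /=.
  have -> : mu q (fun a => - h a) = - mu q h by rewrite /mu -sumrN; apply: eq_bigr => a _; ring.
  have -> : \sum_j (h (o j) - mu q h) = \sum_j h (o j) - N%:R * mu q h.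
    by rewrite sumrB sumr_const card_ord mulr_natl.
  have -> : \sum_j (- h (o j) - - mu q h) = - (\sum_j h (o j) - N%:R * mu q h).
    by rewrite sumrB sumr_const card_ord mulr_natl sumrN; ring.
  set D := \sum_j h (o j) - N%:R * mu q h.
  move=> hb; case: (lerP 0 D) => hD.
    by rewrite ger0_norm // in hb; rewrite hb.
  by rewrite ltr0_norm // in hb; rewrite hb orbT.
rewrite mulr2n mulrDl mul1r; apply: lerD; exact: chernoff1.
Qed.

Definition xbn n (k : nat) (x : plabel n) (b : bool) : plabel n :=
  [ffun i : 'I_n => if (i : nat) == k then ((x i).1, b) else x i].

Lemma odd_cond n (k : 'I_n) (x y : plabel n) (b : bool) :
  [forall i : 'I_n, ((i.+1 < k.+1)%N ==> (y i == x i)) &&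
          ((i.+1 == k.+1)%N ==> ((y i).1 == (x i).1))] && ((y k).2 == b)
  = [forall i : 'I_n, (i < k.+1)%N ==> (y i == xbn k x b i)].
Proof.
apply/idP/idP.
  move=> /andP [/forallP H /eqP Hb]; apply/forallP => i; apply/implyP => lti.
  rewrite ffunE; case: ifP => [/eqP ik|/negbT ne].
    have -> : i = k by apply: ord_inj.
    have := H k; rewrite ltnn eqxx /= => /eqP h1.
    by move: Hb h1; case: (y k) => a c /= -> ->.
  have := H i; rewrite ltnS; have -> : (i < k)%N by rewrite ltn_neqAle -ltnS lti andbT.
  by move=> /andP [].
move=> /forallP H; apply/andP; split.
  apply/forallP => i; have := H i; rewrite ffunE.
  case: ifP => [/eqP ik|/negbT ne].
    have -> : i = k by apply: ord_inj.
    by rewrite ltnS leqnn /= ltnn eqxx /= => /eqP ->.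
  rewrite !ltnS eqSS (negbTE ne).
  by rewrite andbT; move=> /implyP h; apply/implyP => ik; apply: h; apply: ltnW.
by have := H k; rewrite ffunE eqxx ltnS leqnn /= => /eqP ->.
Qed.

Lemma marg_oddE (R : realType) n (psi : {ffun bits n -> R[i]}) (k : 'I_n) x :
  marg_odd psi k.+1 x = marg_even psi k.+1 (xbn k x false) + marg_even psi k.+1 (xbn k x true).
Proof.
rewrite /marg_odd (bigID (fun y : plabel n => (y k).2)) /= addrC; congr (_ + _).
  by apply: eq_bigl => y; rewrite -(odd_cond k x y false) eqbF_neg.
by apply: eq_bigl => y; rewrite -(odd_cond k x y true) eqb_id.
Qed.

Lemma normCR (R : realType) (r : R) : `|r%:C| = `|r|%:C :> R[i].
Proof. by rewrite normc_def /= expr0n /= addr0 sqrtr_sqr. Qed.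

Lemma count_bound (m : nat) : (2 * m * 4 ^ m <= 16 ^ m)%N.
Proof.
elim: m => [|k IH].
  by rewrite muln0.
rewrite !expnS.
have : (4 ^ k <= 16 ^ k)%N by case: k IH => [|k] _; [rewrite !expn0 | rewrite leq_exp2r].
move: IH; set a := (4 ^ k)%N; set b := (16 ^ k)%N => IH h; nia.
Qed.

Lemma ln2 (R : realType) (delta : R) : 0 < delta -> delta <= 2^-1 -> 2^-1 <= ln delta^-1.
Proof.
move=> d0 d1.
rewrite -ler_expR lnK ?posrE ?invr_gt0 //.
have h2 : 2 <= delta^-1.
  by rewrite -[X in X <= _]invrK lef_pV2 ?posrE ?invr_gt0.
apply: (le_trans _ h2); apply: (le_trans (exp_quad _)); first lra.
lra.
Qed.

Definition est_even (R : realType) n N (o : {ffun 'I_N -> plabel n}) (k : nat) (x : plabel n) : R[i] :=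
  (((1 + 1) ^+ k)^-1 * ((N%:R)^-1 * \sum_j hR R k x (o j)))%:C.
Definition est_odd (R : realType) n N (o : {ffun 'I_N -> plabel n}) (k : nat) (x : plabel n) : R[i] :=
  est_even R o k (xbn k.-1 x false) + est_even R o k (xbn k.-1 x true).

Lemma even_ok (R : realType) n N (psi : {ffun bits n -> R[i]}) (o : {ffun 'I_N -> plabel n}) k x (eps : R) :
  (0 < N)%N ->
  `|\sum_j hR R k x (o j) - N%:R * mu (qR psi) (hR R k x)| <= eps * N%:R ->
  `|est_even R o k x - marg_even psi k x| <= (eps / 2 ^+ k)%:C.
Proof.
move=> N0 H.
rewrite marg_evenE /est_even -rmorphB normCR lecR.
have N0' : 0 < N%:R :> R by rewrite ltr0n.
have -> : (2 : R) = 1 + 1 by [].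
have p2 : 0 < (1 + 1) ^+ k :> R by rewrite exprn_gt0 //; lra.
rewrite -mulrBr normrM ger0_norm; last by rewrite invr_ge0 ltW.
rewrite [X in _ <= X]mulrC; apply: ler_wpM2l; first by rewrite invr_ge0 ltW.
have -> : (N%:R)^-1 * \sum_j hR R k x (o j) - \sum_al qR psi al * hR R k x al =
   (N%:R)^-1 * (\sum_j hR R k x (o j) - N%:R * mu (qR psi) (hR R k x)).
  rewrite /mu mulrBr mulrA mulVf ?mul1r //; by rewrite gt_eqF.
rewrite normrM ger0_norm; last by rewrite invr_ge0 ltW.
by rewrite mulrC ler_pdivrMr.
Qed.

Theorem corollary3 (R : realType) :
  exists c : R, 0 < c /\
  forall (n : nat) (eps delta : R),
    (0 < n)%N -> 0 < eps -> eps < 1 -> 0 < delta -> delta <= 2^-1 ->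
    exists N : nat,
      N%:R <= c * n%:R * ln (delta^-1) / eps ^+ 2 /\
      exists (O : finType) (M : O -> pairs_basis n N -> pairs_basis n N -> R[i])
             (est_even est_odd : O -> nat -> plabel n -> R[i]),
        is_povm M /\
        forall psi : {ffun bits n -> R[i]}, pure_state psi ->
          (1 - delta)%:C <= povm_prob M (copies (N:=N) psi)
            (fun o => [forall x : plabel n, forall k : 'I_n,
               (`|est_even o k.+1 x - marg_even psi k.+1 x|
                  <= (eps / 2 ^+ k.+1)%:C) &&
               (`|est_odd o k.+1 x - marg_odd psi k.+1 x|
                  <= (2 * eps / 2 ^+ k.+1)%:C)]).
Proof.
exists 1000; split; first by lra.
move=> n eps delta n0 e0 e1 d0 d1.
set L := ln delta^-1.
have L2 : 2^-1 <= L by apply: ln2.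
have hL : expR (- L) = delta by rewrite expRN lnK ?invrK // posrE invr_gt0.
have nR : 1 <= n%:R :> R by rewrite ler1n.
have e2 : 0 < eps ^+ 2 by rewrite exprn_gt0.
have e21 : eps ^+ 2 <= 1 by rewrite expr2; timeout 20 nra.
set Z := n%:R * L / eps ^+ 2.
have Zh : 2^-1 <= Z.
  rewrite /Z ler_pdivlMr //; timeout 20 nra.
set N := (Num.truncn (992 * Z)).+1.
have hN : 992 * Z < N%:R by apply: truncnS_gt.
have hN2 : N%:R <= 992 * Z + 1.
  have H1 : (Num.truncn (992 * Z))%:R <= 992 * Z by rewrite truncn_le; timeout 20 lra.
  rewrite /N -addn1 natrD; timeout 20 lra.
exists N; split.
  have -> : 1000 * n%:R * L / eps ^+ 2 = 1000 * Z by rewrite /Z; ring.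
  timeout 20 lra.
have N0 : (0 < N)%N by [].
exists {ffun 'I_N -> plabel n}, (@Mv R n N), (@est_even R n N), (@est_odd R n N).
split; first exact: Mv_povm.
move=> psi Hp.
rewrite povm_probE lecR.
pose w (o : {ffun 'I_N -> plabel n}) := \prod_j qR psi (o j).
have w0 : forall o, 0 <= w o by move=> o; apply: prodr_ge0 => j _; apply: qR_ge0.
have ws : \sum_o w o = 1 := qprod_sum N Hp.
pose B (p : plabel n * 'I_n) (o : {ffun 'I_N -> plabel n}) :=
  eps * N%:R < `|\sum_j hR R p.2.+1 p.1 (o j) - N%:R * mu (qR psi) (hR R p.2.+1 p.1)|.
pose G (o : {ffun 'I_N -> plabel n}) := [forall p, ~~ B p o].
have GS : forall o, G o -> [forall x : plabel n, forall k : 'I_n,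
               (`|est_even R o k.+1 x - marg_even psi k.+1 x|
                  <= (eps / 2 ^+ k.+1)%:C) &&
               (`|est_odd R o k.+1 x - marg_odd psi k.+1 x|
                  <= (2 * eps / 2 ^+ k.+1)%:C)].
  move=> o Go; apply/forallP => x; apply/forallP => k.
  have gd : forall y, `|\sum_j hR R k.+1 y (o j) - N%:R * mu (qR psi) (hR R k.+1 y)| <= eps * N%:R.
    by move=> y; have := forallP Go (y, k); rewrite /B /= -leNgt.
  apply/andP; split; first exact: even_ok.
  rewrite marg_oddE /est_odd /= opprD addrACA.
  apply: (le_trans (ler_normD _ _)).
  have -> : (2 * eps / 2 ^+ k.+1)%:C = (eps / 2 ^+ k.+1)%:C + (eps / 2 ^+ k.+1)%:C :> R[i].
    by rewrite -rmorphD; congr (_%:C); ring.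
  by apply: lerD; apply: even_ok.
have key : 1 - delta <= \sum_(o | G o) w o.
  have -> : \sum_(o | G o) w o = 1 - \sum_(o | ~~ G o) w o.
    by rewrite -ws [in RHS](bigID G) /= addrK.
  have bad : \sum_(o | ~~ G o) w o <= \sum_(p : plabel n * 'I_n) \sum_(o | B p o) w o.
    apply: (le_trans (y := \sum_o \sum_(p : plabel n * 'I_n) (B p o)%:R * w o)).
      rewrite big_mkcond; apply: ler_sum => o _; case: ifP => hg.
        move/forallPn: hg => [p]; rewrite negbK => hp.
        rewrite (bigD1 p) //= hp mul1r lerDl; apply: sumr_ge0 => p' _.
        by rewrite mulr_ge0 // ler0n.
      by apply: sumr_ge0 => p _; rewrite mulr_ge0 // ler0n.
    rewrite exchange_big; apply: ler_sum => p _; rewrite [X in _ <= X]big_mkcond.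
    by apply: ler_sum => o _; case: ifP => _; rewrite ?mul1r ?mul0r.
  have each : forall p, \sum_(o | B p o) w o <= 2 * expR (- (N%:R * eps ^+ 2 / 32)).
    move=> [x k]; apply: chernoff2 => //.
    - by move=> a; apply: qR_ge0.
    - exact: qR_sum.
    - by move=> a; apply: hR_bound; apply: ltn_ord.
    - exact: ltW.
  have tot : \sum_(p : plabel n * 'I_n) \sum_(o | B p o) w o <= delta.
    apply: (le_trans (ler_sum _ (fun p _ => each p))).
    rewrite sumr_const card_prod card_ffun card_prod card_bool !card_ord.
    have hexp : expR (- (N%:R * eps ^+ 2 / 32)) <= delta * (expR 15 ^+ n)^-1.
      rewrite -hL -expRM_natl -expRN -expRD ler_expR.
      have : 992 * (n%:R * L) <= N%:R * eps ^+ 2.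
        have := hN; rewrite /Z mulrA ltr_pdivrMr // => /ltW //.
      timeout 20 nra.
    have cnt : (((2 * 2) ^ n * n)%N%:R * 2 : R) <= expR 15 ^+ n.
      apply: (le_trans (y := (16 ^ n)%N%:R)).
        rewrite -natrM ler_nat.
        have -> : ((2 * 2) ^ n * n * 2 = 2 * n * (2 * 2) ^ n)%N.
          by rewrite [LHS]mulnC [LHS]mulnA [RHS]mulnAC.
        exact: count_bound.
      rewrite natrX; apply: lerXn2r; rewrite ?nnegrE ?expR_ge0 //.
      by have := expR_ge1Dx (15 : R); timeout 20 lra.
    have pe : 0 < expR 15 ^+ n :> R by rewrite exprn_gt0 // expR_gt0.
    rewrite -[X in X <= delta]mulr_natr.
    set E := expR _; set A := (X in _ * X <= delta).
    have -> : 2 * E * A = (A * 2) * E by ring.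
    apply: (le_trans (ler_wpM2l _ hexp)); first by rewrite mulr_ge0 ?ler0n.
    apply: (le_trans (ler_wpM2r _ cnt)).
      by rewrite mulr_ge0 ?invr_ge0 ?ltW.
    by rewrite mulrCA mulfV ?mulr1 // gt_eqF.
  timeout 20 lra.
apply: (le_trans key); rewrite big_mkcond [X in _ <= X]big_mkcond; apply: ler_sum => o _.
case: ifP => Go; last by case: ifP => _; rewrite ?w0 ?lexx.
by rewrite ifT //; apply: GS.
Qed.
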